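(* Assume the following hypothesis: there is a constant $A$ such that, for all sufficiently large $n$, every big irreducible representation $\lambda$ of $S_n$ satisfies $\left|\chi_\lambda(\pi)/d_\lambda\right| \le A^{t(\pi)} n^{-t(\pi)/2}$ for all $\pi\in S_n$. Then all big irreducible representations $\lambda$ of $S_n$ are $O(\sqrt{n})$-smooth, i.e. there is a constant $C$ such that for all sufficiently large $n$ and every big irrep $\lambda$ of $S_n$, $\sum_{\pi\in S_n}\left|\chi_\lambda(\pi)/d_\lambda\right|^4 \le C\sqrt{n}$.
   Context: An irreducible representation $\lambda$ of $S_n$ with character $\chi_\lambda$ and dimension $d_\lambda$ is called big if $d_\lambda > e^{-\sqrt{n}\log n}\sqrt{n!}$ (natural logarithm). For $\pi\in S_n$, $t(\pi)$ is the minimum number of transpositions whose product is $\pi$ (equivalently the number of non-fixed points minus the number of nontrivial cycles). *)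

(* Defs.v *)
From HB Require Import structures.
From mathcomp Require Import all_boot all_order all_algebra all_fingroup all_field all_character.
From Stdlib Require Reals.
Set Implicit Arguments. Unset Strict Implicit. Unset Printing Implicit Defensive.
Import Order.TTheory GRing.Theory Num.Theory.
Local Open Scope ring_scope.

Definition Sn (n : nat) : {group 'S_n} := [set: 'S_n]%G.

(* Dimension d_lambda of the irreducible representation indexed by i:
   the degree 'chi_i 1, which is a natural number (Cnat), read as a nat. *)
Definition irr_dim (n : nat) (i : Iirr (Sn n)) : nat :=
  Num.truncn ('chi[Sn n]_i 1%g).

Definition normchar (n : nat) (i : Iirr (Sn n)) (p : 'S_n) : algC :=
  'chi[Sn n]_i p / 'chi[Sn n]_i 1%g.

Definition big_irr (n : nat) (i : Iirr (Sn n)) : Prop :=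
  Rdefinitions.Rlt
    (Rdefinitions.Rmult
       (Rtrigo_def.exp (Rdefinitions.Ropp (Rdefinitions.Rmult (R_sqrt.sqrt (Raxioms.INR n)) (Rpower.ln (Raxioms.INR n)))))
       (R_sqrt.sqrt (Raxioms.INR (n `!))))
    (Raxioms.INR (irr_dim i)).

Definition tcost (n : nat) (p : 'S_n) : nat :=
  (#|[set x : 'I_n | p x != x]| - #|[set c in porbits p | 1 < #|c|]|)%N.

(* Main.v *)
Require Import Defs.
From mathcomp Require Import all_boot all_order all_algebra all_fingroup all_field all_character.
From mathcomp Require Import zify ring lra.
Set Implicit Arguments. Unset Strict Implicit. Unset Printing Implicit Defensive.
Import Order.TTheory GRing.Theory Num.Theory.
Local Open Scope ring_scope.
Section Comb.
Variable T : finType.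

Lemma porbit_fix (q : {perm T}) a : q a = a -> porbit q a = [set a].
Proof.
move=> qa; apply/setP=> y; rewrite inE; apply/porbitP/eqP => [[i ->]|->].
  by rewrite permX iter_fix.
by exists 0%N; rewrite expg0 perm1.
Qed.

Lemma porbit_fixP (q : {perm T}) a : (#|porbit q a| <= 1)%N = (q a == a).
Proof.
apply/idP/eqP => [|/porbit_fix->]; last by rewrite cards1.
move/card_le1_eqP => H; apply/esym; apply: (H (q a) a); last exact: porbit_id.
have := mem_porbit q 1 a; by rewrite expg1.
Qed.

Lemma card_porbits_le (q : {perm T}) : (#|porbits q| <= #|T|)%N.
Proof. exact: leq_imset_card. Qed.

Lemma card_porbits1 : #|porbits (1 : {perm T})| = #|T|.
Proof.
rewrite /porbits (eq_imset (g := fun x => [set x])); last first.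
  by move=> x; rewrite porbit_fix // perm1.
by rewrite card_imset //; apply: set1_inj.
Qed.

Lemma perm_onS (S S' : {set T}) (p : {perm T}) :
  S \subset S' -> perm_on S p -> perm_on S' p.
Proof. by move=> sS pS; apply: subset_trans sS. Qed.

Lemma porbits_step (q : {perm T}) a j : q a = a ->
  (#|porbits (tperm a j * q)| + (j != a) = #|porbits q|)%N.
Proof.
move=> qa; have := porbits_mul_tperm q a j; rewrite /=.
rewrite porbit_sym porbit_fix // inE eq_sym.
by case: eqP => _ /=; lia.
Qed.

Definition fexp (p : {perm T}) := (#|T| - #|porbits p|)%N.

Lemma fexp_step (q : {perm T}) a j : q a = a ->
  fexp (tperm a j * q) = (fexp q + (j != a))%N.
Proof.
move=> qa; rewrite /fexp; have := porbits_step j qa.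
have := card_porbits_le q; lia.
Qed.

Lemma sum_perm_on (R : comPzRingType) (y : R) (S : {set T}) :
  \sum_(p | perm_on S p) y ^+ fexp p = \prod_(i < #|S|) (1 + i%:R * y).
Proof.
move cS: #|S| => m; elim: m S cS => [|m IH] S cS.
  rewrite big_ord0 (big_pred1 1%g).
    by rewrite /fexp card_porbits1 subnn expr0.
  move=> p /=; apply/idP/eqP => [pS|->]; last exact: perm_on1.
  by apply: perm_on_id pS _; rewrite cS.
have [a aS] : exists a, a \in S.
  by apply/set0Pn; rewrite -card_gt0 cS.
set S' := S :\ a.
have cS' : #|S'| = m by rewrite /S' (cardsD1 a S) aS in cS; case: cS.
rewrite big_ord_recr /= -(IH S') // {IH}.
rewrite (partition_big (fun p : {perm T} => (p^-1)%g a) (mem S)); last first.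
  by move=> p pS /=; rewrite (perm_closed _ (perm_onV pS)).
have inner j : j \in S -> \sum_(p | perm_on S p && ((p^-1)%g a == j)) y ^+ fexp p
   = \sum_(q | perm_on S' q) y ^+ (fexp q + (j != a)).
  move=> jS.
  rewrite (reindex_onto (fun q => (tperm a j * q)%g) (fun p => (tperm a j * p)%g)); last first.
    by move=> p _; rewrite tpermKg.
  apply: eq_big => [q|q /andP[/andP[_ /eqP e] _]]; last first.
    rewrite fexp_step //.
    by have := permKV (tperm a j * q)%g a; rewrite e permM tpermR.
  rewrite tpermKg eqxx andbT.
  have tS : perm_on S (tperm a j).
    by apply: perm_onS (tperm_on a j); apply/subsetP=> x; rewrite !inE => /orP[]/eqP->.
  apply/andP/idP => [[pS /eqP e]|qS'].
    have qa : q a = a.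
      by have := permKV (tperm a j * q)%g a; rewrite e permM tpermR.
    have qS : perm_on S q by rewrite -(tpermKg a j q); apply: perm_onM.
    apply/subsetP => x; rewrite !inE => qx; rewrite (subsetP qS x) ?andbT ?inE //.
    by apply: contraNneq qx => ->; rewrite qa.
  have qa : q a = a by apply: (out_perm qS'); rewrite !inE eqxx.
  split.
    by apply: perm_onM => //; apply: perm_onS qS'; apply: subsetDl.
  by rewrite -(inj_eq (@perm_inj _ (tperm a j * q)%g)) permKV permM tpermR qa.
rewrite (eq_bigr _ inner) (bigD1 a) //= eqxx /=; under eq_bigr do rewrite addn0. rewrite mulrDr mulr1; congr (_ + _).
rewrite (eq_bigr (fun j => y * \sum_(q | perm_on S' q) y ^+ fexp q)); last first.
  move=> j /andP[_ ja]; rewrite ja mulr_sumr; apply: eq_bigr => q _.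
  by rewrite addn1 exprS.
rewrite sumr_const; set c := #|_|; have -> : c = m.
  by rewrite -cS'; apply: eq_card => x; rewrite !inE andbC.
by rewrite -[LHS]mulr_natl [RHS]mulrC -mulrA.
Qed.

Lemma tcost_fexp (p : {perm T}) :
  (#|[set x : T | p x != x]| - #|[set c in porbits p | 1 < #|c|]|)%N = fexp p.
Proof.
set F := [set x : T | p x == x].
have eNF : #|[set x : T | p x != x]| = (#|T| - #|F|)%N.
  rewrite -(cardsC F); have -> : ~: F = [set x : T | p x != x].
    by apply/setP => x; rewrite !inE.
  lia.
set B := [set c : {set T} | 1 < #|c|]%N.
have e1 : [set c in porbits p | 1 < #|c|]%N = porbits p :&: B.
  by apply/setP => c; rewrite !inE.
have e0 : porbits p :\: B = porbit p @: F.
  apply/setP => c; rewrite !inE; apply/andP/imsetP => [[nB /imsetP[x _ cE]]|[x]].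
    by exists x => //; rewrite inE -porbit_fixP -cE leqNgt.
  rewrite inE => px ->; split; last exact: imset_f.
  by rewrite -leqNgt porbit_fixP.
have cF : #|porbit p @: F| = #|F|.
  apply: card_in_imset => x y; rewrite !inE => /eqP px /eqP py.
  by rewrite !porbit_fix // => /set1_inj.
have := cardsID B (porbits p); rewrite e0 cF -e1 /fexp eNF.
have := card_porbits_le p; lia.
Qed.

End Comb.
Section An.
Variable R : realFieldType.

Lemma bern_up (e : R) m : 0 <= e -> 1 + m%:R * e <= (1 + e) ^+ m.
Proof.
move=> e0; elim: m => [|m IH]; first by rewrite mul0r addr0 expr0.
rewrite exprS.
have h1 : 0 <= 1 + e by lra.
have := ler_wpM2l h1 IH.
have : 0 <= m%:R * e * e by apply: mulr_ge0 => //; apply: mulr_ge0.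
rewrite -natr1; nra.
Qed.

Lemma bern_down (e : R) m : 0 <= e -> e <= 1 -> 1 - m%:R * e <= (1 - e) ^+ m.
Proof.
move=> e0 e1; elim: m => [|m IH]; first by rewrite mul0r subr0 expr0.
rewrite exprS.
have h1 : 0 <= 1 - e by lra.
have := ler_wpM2l h1 IH.
have : 0 <= m%:R * e * e by apply: mulr_ge0 => //; apply: mulr_ge0.
rewrite -natr1; nra.
Qed.

Lemma key_bound (n K : nat) : (0 < n)%N ->
  (1 + K%:R / n%:R) ^+ n <= (4 ^ K)%:R :> R.
Proof.
move=> n0.
have nR : 0 < n%:R :> R by rewrite ltr0n.
have n1 : 1 <= n%:R :> R by rewrite ler1n.
have nz : n%:R != 0 :> R by rewrite gt_eqF.
set e : R := (2 * n%:R)^-1.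
have e0 : 0 <= e by rewrite invr_ge0; lra.
have ne : n%:R * e = 2^-1.
  by rewrite /e invfM mulrCA divff ?mulr1.
have e1 : e <= 1.
  rewrite /e invf_le1; lra.
have hd := bern_down n e0 e1; rewrite ne in hd.
have hp : 0 <= (1 + e) ^+ n by apply: exprn_ge0; lra.
have hm : (1 + e) ^+ n * (1 - e) ^+ n <= 1.
  rewrite -exprMn; apply: exprn_ile1; nra.
have h2 : (1 + e) ^+ n <= 2.
  have : (1 + e) ^+ n * 2^-1 <= (1 + e) ^+ n * (1 - e) ^+ n.
    have hd2 : 2^-1 <= (1 - e) ^+ n by lra.
    exact: (ler_wpM2l hp hd2).
  lra.
have hu := bern_up (2 * K)%N e0.
have hKn : (2 * K)%:R * e = K%:R / n%:R.
  rewrite natrM /e invfM; field; exact: nz.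
rewrite hKn in hu.
have hK0 : 0 <= 1 + K%:R / n%:R :> R.
  have : 0 <= K%:R / n%:R :> R.
    by apply: divr_ge0; [exact: ler0n | exact: ltW].
  move=> h; lra.
apply: le_trans (_ : ((1 + e) ^+ (2 * K)) ^+ n <= _).
  by apply: lerXn2r => //; rewrite nnegrE; apply: exprn_ge0; lra.
rewrite -exprM mulnC exprM.
apply: le_trans (_ : 2 ^+ (2 * K) <= _).
  by apply: lerXn2r; rewrite ?nnegrE //; lra.
rewrite exprM natrX; apply: lerXn2r; rewrite ?nnegrE ?expr2; lra.
Qed.

End An.
Lemma norm_bound (A s : algC) (t : nat) : 0 <= s ->
  `|A ^+ t * s ^- t| ^+ 4 = (`|A| ^+ 4 / (s ^+ 2) ^+ 2) ^+ t.
Proof.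
move=> s0; rewrite normrM normfV !normrX (ger0_norm s0).
rewrite exprMn expr_div_n -!exprVn -!exprM.
by rewrite (mulnC t 4) (mulnA 2 2 t).
Qed.

Theorem lemma2 :
  (exists A : algC, exists N : nat, forall n : nat, (N <= n)%N ->
     forall i : Iirr (Sn n), big_irr i ->
     forall p : 'S_n, `|normchar i p| <= A ^+ tcost p * (sqrtC n%:R) ^- tcost p) ->
  exists C : algC, exists N : nat, forall n : nat, (N <= n)%N ->
     forall i : Iirr (Sn n), big_irr i ->
     \sum_(p : 'S_n) `|normchar i p| ^+ 4 <= C * sqrtC n%:R.
Proof.
case=> A [N0 H].
set B := `|A| ^+ 4.
have B0 : 0 <= B by apply: exprn_ge0.
set K := Num.Def.archi_bound B.
have BK : B <= K%:R by apply: ltW; apply: archi_boundP.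
exists (4 ^ K)%:R, (maxn N0 1) => n; rewrite geq_max => /andP[nN n1] i bi.
set s := sqrtC n%:R.
have s0 : 0 <= s by rewrite sqrtC_ge0 ler0n.
have s2 : s ^+ 2 = n%:R by rewrite sqrtCK.
have nR : 0 < n%:R :> algC by rewrite ltr0n.
set y : algC := K%:R / (n%:R ^+ 2).
have y0 : 0 <= y by apply: divr_ge0; [exact: ler0n | exact: exprn_ge0; exact: ltW].
have step1 : forall p : 'S_n, `|normchar i p| ^+ 4 <= y ^+ tcost p.
  move=> p; have h := H n nN i bi p.
  have r0 : 0 <= A ^+ tcost p * s ^- tcost p := le_trans (normr_ge0 _) h.
  apply: (le_trans (lerXn2r 4 _ _ h)); rewrite ?nnegrE //.
  rewrite -{1}(ger0_norm r0) norm_bound // s2.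
  apply: lerXn2r; rewrite ?nnegrE.
  - by apply: divr_ge0 => //; apply: exprn_ge0; exact: ltW.
  - exact: y0.
  by apply: ler_wpM2r => //; rewrite invr_ge0; apply: exprn_ge0; exact: ltW.
apply: (le_trans (ler_sum _ (fun p _ => step1 p))).
have -> : \sum_(p : 'S_n) y ^+ tcost p = \sum_(p | perm_on [set: 'I_n] p) y ^+ fexp p.
  apply: eq_big => [p|p _]; first by apply/esym/subsetP => x; rewrite inE.
  by rewrite /tcost tcost_fexp.
rewrite sum_perm_on cardsT card_ord.
set z : algC := 1 + K%:R / n%:R.
have hz : \prod_(j < n) (1 + j%:R * y) <= z ^+ n.
  have -> : z ^+ n = \prod_(j < n) z by rewrite prodr_const card_ord.
  apply: ler_prod => j _.
  apply/andP; split.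
    by apply: addr_ge0 => //; apply: mulr_ge0 => //; exact: ler0n.
  rewrite lerD2l /y mulrA.
  have -> : K%:R / n%:R = n%:R * K%:R / n%:R ^+ 2 :> algC.
    by field; rewrite gt_eqF.
  apply: ler_wpM2r; first by rewrite invr_ge0; apply: exprn_ge0; exact: ltW.
  apply: ler_wpM2r; first exact: ler0n.
  by rewrite ler_nat; exact: ltnW.
have hk : z ^+ n <= (4 ^ K)%:R.
  have := @key_bound rat n K n1.
  rewrite -(ler_rat algC) rmorphXn rmorphD rmorph1 fmorph_div !rmorph_nat.
  by [].
have s1 : 1 <= s.
  rewrite -(ler_pXn2r (n := 2)) ?nnegrE // ?expr1n ?s2 ?ler1n //.
apply: (le_trans hz); apply: (le_trans hk).
rewrite -{1}[(4 ^ K)%:R]mulr1; apply: ler_wpM2l => //; exact: ler0n.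
Qed.
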